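(* For every composition $\alpha$, the coproduct of $\mathrm{QSym}$ satisfies $\Delta(S_\alpha)=\sum_{\beta\gamma=\alpha}S_\beta\otimes S_\gamma$, where the sum is over all ways of writing $\alpha$ as a concatenation $\beta\gamma$ of two (possibly empty) compositions.
   Context: A composition $\alpha=(\alpha_1,\dots,\alpha_\ell)$ of $n$ is a finite sequence of positive integers summing to $n$; the concatenation of $\beta$ and $\gamma$ is $\beta\gamma$; the empty composition $()$ has $M_{()}=S_{()}=1$. Set $\mathcal{I}(\alpha)=\{\alpha_1,\alpha_1+\alpha_2,\dots,\alpha_1+\cdots+\alpha_{\ell-1}\}$, and write $\beta\le\alpha$ if $\mathcal{I}(\beta)\subseteq\mathcal{I}(\alpha)$. $M_\alpha=\sum_{i_1<\cdots<i_\ell}x_{i_1}^{\alpha_1}\cdots x_{i_\ell}^{\alpha_\ell}$. $\mathrm{QSym}$ is the Hopf algebra spanned by the $M_\alpha$ with coproduct $\Delta(M_\alpha)=\sum_{\beta\gamma=\alpha}M_\beta\otimes M_\gamma$. Shuffle functions: for $\alpha=(\alpha_1,\dots,\alpha_\ell)$ let $\mathrm{OtE}(\alpha)=\{i:\alpha_i\text{ odd},\ \alpha_{i+1}\text{ even}\}=\{i_1<\cdots<i_k\}$ and $m_o(\alpha)=(\alpha_1+\cdots+\alpha_{i_1},\ \alpha_{i_1+1}+\cdots+\alpha_{i_2},\ \dots,\ \alpha_{i_k+1}+\cdots+\alpha_\ell)$. For $m_o(\alpha)\le\beta\le\alpha$, each part $\beta_i$ is a sum of a block of consecutive parts of $\alpha$;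 with $\mathrm{O}(i),\mathrm{E}(i)$ the numbers of odd and even parts of that block put $c_\alpha^\beta=\prod_i\frac{1}{\mathrm{O}(i)!\mathrm{E}(i)!}$. Then $S_\alpha=\sum_{m_o(\alpha)\le\beta\le\alpha}c_\alpha^\beta M_\beta$. *)

(* Defs.v *)
(* QSym is modelled through its monomial basis: an element
   F of QSym is represented by its coefficient function  beta |-> [M_beta]F,
   and an element of QSym (x) QSym by its coefficient function
   (delta, eps) |-> [M_delta (x) M_eps]. *)
From mathcomp Require Import all_boot all_order all_algebra.
Set Implicit Arguments. Unset Strict Implicit. Unset Printing Implicit Defensive.
Import GRing.Theory Num.Theory.
Local Open Scope ring_scope.

Definition is_comp (a : seq nat) : bool := all (fun x => 0 < x)%N a.

Definition Iset (a : seq nat) : seq nat :=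
  [seq sumn (take k a) | k <- iota 1 (size a).-1].

Definition comp_le (b a : seq nat) : bool :=
  [&& is_comp b, is_comp a, sumn b == sumn a & all (fun x => x \in Iset a) (Iset b)].

(* split a sequence into consecutive blocks, cutting after each position whose
   partial sum lies in I *)
Fixpoint cutI (I : seq nat) (acc : nat) (cur : seq nat) (s : seq nat)
  : seq (seq nat) :=
  match s with
  | [::] => [:: cur]
  | x :: s' =>
      if ((acc + x)%N \in I) && (s' != [::])
      then rcons cur x :: cutI I (acc + x) [::] s'
      else cutI I (acc + x) (rcons cur x) s'
  end.

Definition blocks (a : seq nat) (I : seq nat) : seq (seq nat) :=
  if a is [::] then [::] else cutI I 0 [::] a.

Definition OtE (a : seq nat) : seq nat :=
  [seq i <- iota 1 (size a).-1 | odd (nth 0%N a i.-1) && ~~ odd (nth 0%N a i)].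

Definition m_o (a : seq nat) : seq nat :=
  map sumn (blocks a [seq sumn (take i a) | i <- OtE a]).

Definition c_coef (a b : seq nat) : rat :=
  \prod_(bl <- blocks a (Iset b))
     (((count odd bl)`! * (count (fun x => ~~ odd x) bl)`!)%:R)^-1.

Definition S_fun (a : seq nat) : seq nat -> rat :=
  fun b => if comp_le (m_o a) b && comp_le b a then c_coef a b else 0.

(* coproduct: Delta(sum_beta F(beta) M_beta) = sum_beta F(beta) sum_{delta eps = beta} M_delta (x) M_eps *)
Definition Delta (F : seq nat -> rat) : seq nat -> seq nat -> rat :=
  fun d e => F (d ++ e).

Definition tensor (F G : seq nat -> rat) : seq nat -> seq nat -> rat :=
  fun d e => F d * G e.

(* Main.v *)
Require Import Defs.
From mathcomp Require Import all_boot all_order all_algebra.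
Set Implicit Arguments. Unset Strict Implicit.
From mathcomp Require Import all_boot all_order all_algebra zify.


Definition psum (s : seq nat) (k : nat) : nat := sumn (take k s).

Lemma Iset_cons x r : Iset (x :: r) =
  if r is [::] then [::] else x :: map (addn x) (Iset r).
Proof.
rewrite /Iset; case: r => [|y r] //=.
rewrite addn0 (iotaDl 1 1) -!map_comp; congr (_ :: _); apply: eq_map => k /=.

Qed.

Lemma mem_map_addn c L v : (v \in map (addn c) L) = (c <= v)%N && (v - c \in L).
Proof.
apply/mapP/andP => [[u hu ->]|[h1 h2]]; first by rewrite leq_addr addKn.
by exists (v - c)%N => //; rewrite subnKC.
Qed.

Lemma psum_lt a i j : is_comp a -> (i < j)%N -> (j <= size a)%N -> (psum a i < psum a j)%N.
Proof.
move=> ha hij hj; rewrite /psum -(subnKC (ltnW hij)) takeD sumn_cat -[X in (X < _)%N]addn0 ltn_add2l.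
have hd : (0 < size (drop i a))%N by rewrite size_drop; lia.
have : all (fun x => 0 < x)%N (drop i a).
  by move: ha; rewrite /is_comp -{1}(cat_take_drop i a) all_cat => /andP[].
case: (drop i a) hd => [|x r] //= _ /andP[hx _].
have -> : (j - i = (j - i).-1.+1)%N by lia.
rewrite /=; lia.
Qed.

Lemma psum_inj a i j : is_comp a -> (i <= size a)%N -> (j <= size a)%N -> psum a i = psum a j -> i = j.
Proof.
move=> ha hi hj e; case: (ltngtP i j) => // h.
  by have := psum_lt ha h hj; rewrite e ltnn.
by have := psum_lt ha h hi; rewrite e ltnn.
Qed.

Lemma mem_Iset a v : (v \in Iset a) = has (fun k => (v == psum a k)) (iota 1 (size a).-1).
Proof. by apply/mapP/hasP => [[k hk ->]|[k hk /eqP ->]]; exists k. Qed.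

Lemma Iset_range c v : is_comp c -> v \in Iset c -> (0 < v)%N && (v < sumn c)%N.
Proof.
move=> hc; rewrite mem_Iset => /hasP[k]; rewrite mem_iota => hk /eqP ->.
have h0 := psum_lt hc (i:=0) (j:=k); have h1 := psum_lt hc (i:=k) (j:=size c).
rewrite /psum take0 take_size /= in h0 h1; rewrite h0 ?h1 //; lia.
Qed.

Lemma Iset_ge x r v : v \in Iset (x :: r) -> (x <= v)%N.
Proof.
rewrite Iset_cons; case: r => // y r; rewrite in_cons mem_map_addn.
by case/orP => [/eqP ->|/andP[]].
Qed.

Lemma Iset_inj c c' : is_comp c -> is_comp c' -> sumn c = sumn c' -> Iset c =i Iset c' -> c = c'.
Proof.
elim: c c' => [|x r IH] [|x' r'] //=.
- by move=> _ /andP[h _] /= e; lia.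
- by move=> /andP[h _] _ /= e; lia.
move=> /andP[hx hr] /andP[hx' hr'] e hI.
case: r IH hr e hI => [|y r] IH hr e hI.
  case: r' hr' e hI => [|y' r'] hr' e hI; first by rewrite /= !addn0 in e; rewrite e.
  by have := hI x'; rewrite !Iset_cons /= in_cons eqxx.
case: r' hr' e hI => [|y' r'] hr' e hI.
  by have := hI x; rewrite !Iset_cons /= in_cons eqxx.
have ex : x = x'.
  have h1 : (x' <= x)%N by apply: (@Iset_ge x' (y'::r')); rewrite -hI !Iset_cons /= in_cons eqxx.
  have h2 : (x <= x')%N by apply: (@Iset_ge x (y::r)); rewrite hI !Iset_cons /= in_cons eqxx.
  lia.
subst x'; congr (_ :: _); apply: IH => //; first by move: e => /= e; lia.
move=> v; have := hI (x + v)%N; rewrite (Iset_cons x (y::r)) (Iset_cons x (y'::r')) !in_cons !mem_map_addn leq_addr addKn.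
case: (posnP v) => [->|hv]; last by have -> : (x + v == x) = false by apply/negbTE/eqP; lia.
have H0 : forall s, is_comp s -> (0 \in Iset s) = false.
  by move=> s hs; apply/negbTE/negP => /(Iset_range hs).
by rewrite (H0 _ hr) (H0 _ hr').
Qed.

Lemma cutI_flatten I acc cur s : flatten (cutI I acc cur s) = cur ++ s.
Proof.
elim: s acc cur => [|x s IH] acc cur /=; first by rewrite cats0.
by case: ifP => _ /=; rewrite IH cat_rcons.
Qed.

Lemma cutI_nonempty I acc cur s : (cur != [::]) || (s != [::]) ->
  all (fun bl => bl != [::]) (cutI I acc cur s).
Proof.
elim: s acc cur => [|x s IH] acc cur /=; first by rewrite orbF andbT.
move=> _; case: ifP => h /=.
  rewrite -size_eq0 size_rcons /=; apply: IH; by case/andP: h => _ ->; rewrite orbT.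
case: s IH h => [|y s] IH h; first by rewrite /= -size_eq0 size_rcons.
by apply: IH; rewrite orbT.
Qed.

Lemma cutI_neq0 I acc cur s : cutI I acc cur s != [::].
Proof.
elim: s acc cur => [|x s IH] acc cur //=; by case: ifP.
Qed.

Lemma cutI_pos I acc cur s v :
  (v \in Iset (map size (cutI I acc cur s))) =
  [&& (size cur < v)%N, (v < size cur + size s)%N & (acc + psum s (v - size cur))%N \in I].
Proof.
elim: s acc cur v => [|x s IH] acc cur v /=.
  by rewrite addn0; apply/esym/and3P => [[h1 h2 _]]; lia.
case: s IH => [|y s] IH.
  rewrite andbF /=; apply/esym/and3P => [[h1 h2 _]]; lia.
have -> : ((y :: s) != [::]) = true by [].
rewrite andbT; case: ifP => hI.
  case E: (map size (cutI I (acc + x) [::] (y :: s))) => [|z l].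
    by move: (cutI_neq0 I (acc+x) [::] (y :: s)); rewrite -size_eq0 -(size_map size) E.
  set rest := cutI I (acc + x) [::] (y :: s) in E *.
  change (map size (rcons cur x :: rest)) with (size (rcons cur x) :: map size rest).
  rewrite E Iset_cons -E in_cons mem_map_addn IH size_rcons /=.
  case: (ltngtP v (size cur).+1) => h.
  - by [].
  - rewrite subn0 add0n.
    have -> : (v - size cur = (v - (size cur).+1).+1)%N by lia.
    rewrite /psum /= addnA.
    have -> : (0 < v - (size cur).+1)%N = true by lia.
    have -> : ((v - (size cur).+1 < (size s).+1)%N = (v < size cur + (size s).+2)%N) by apply/idP/idP; lia.
    by [].
  - rewrite /= h subSnn /psum /= addn0 hI andbT; apply/esym; lia.
rewrite IH size_rcons.
case: (ltngtP v (size cur).+1) => h.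
- by [].
- have -> : (v - size cur = (v - (size cur).+1).+1)%N by lia.
  rewrite /psum /= addnA.
  have -> : (v < (size cur).+1 + (size s).+1)%N = (v < size cur + (size s).+2)%N by apply/idP/idP; lia.
  by [].
- by rewrite /= h subSnn /psum /= addn0 hI andbF.
Qed.

Lemma blocks_flatten a I : flatten (blocks a I) = a.
Proof. by case: a => // x a; rewrite /blocks cutI_flatten. Qed.

Lemma blocks_nonempty a I : all (fun bl => bl != [::]) (blocks a I).
Proof. by case: a => // x a; rewrite /blocks; apply: cutI_nonempty. Qed.

Lemma blocks_pos a I v : (v \in Iset (map size (blocks a I))) =
  [&& (0 < v)%N, (v < size a)%N & psum a v \in I].
Proof.
case: a => [|x a]; first by apply/esym/and3P => [[h1 h2 _]]; move: h2 => /=; lia.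
by rewrite /blocks cutI_pos /= subn0.
Qed.

Lemma Iset_map_sumn a ss : flatten ss = a ->
  Iset (map sumn ss) = map (psum a) (Iset (map size ss)).
Proof.
move=> <-; rewrite /Iset !size_map -map_comp; apply: eq_map => k /=.
rewrite -!map_take -sumn_flatten /psum.
have -> : sumn (map size (take k ss)) = size (flatten (take k ss)) by rewrite size_flatten.
have -> : flatten ss = flatten (take k ss) ++ flatten (drop k ss) by rewrite -flatten_cat cat_take_drop.
by rewrite take_size_cat.
Qed.

Definition Pp (a b : seq nat) (ss : seq (seq nat)) : bool :=
  [&& all (fun bl => bl != [::]) ss, flatten ss == a & map sumn ss == b].

Lemma prefix_uniq u r u' r' : is_comp (u ++ r) -> u ++ r = u' ++ r' -> sumn u = sumn u' -> u = u'.
Proof.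
elim: u u' => [|x u IH] [|x' u'] //=.
- by move=> + e; rewrite e /= => /andP[h _] /=; lia.
- by move=> /andP[h _] _; lia.
move=> /andP[hx h] [ex e] hs; subst x'; congr (_ :: _); apply: IH => //; lia.
Qed.

Lemma is_comp_cat s t : is_comp (s ++ t) = is_comp s && is_comp t.
Proof. by rewrite /is_comp all_cat. Qed.

Lemma Pp_comp a b ss : is_comp a -> Pp a b ss -> is_comp b.
Proof.
move=> ha /and3P[hn /eqP hf /eqP <-]; subst a.
elim: ss hn ha => [|bl ss IH] //= /andP[hbl hn]; rewrite is_comp_cat => /andP[h1 h2].
rewrite (IH hn h2) andbT.
case: bl hbl h1 => [|x bl] //= _ /andP[hx _]; rewrite ltn_addr //.
Qed.

Lemma comp_sizes (ss : seq (seq nat)) : all (fun bl => bl != [::]) ss -> is_comp (map size ss).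
Proof.
by elim: ss => [|bl ss IH] //= /andP[h1 h2]; rewrite /is_comp /= lt0n size_eq0 h1; exact: IH.
Qed.

Lemma Pp_uniq a b ss tt : is_comp a -> Pp a b ss -> Pp a b tt -> ss = tt.
Proof.
elim: ss a b tt => [|bl ss IH] a b [|bl' tt] //=.
- by move=> _ /and3P[_ _ /eqP <-] /and3P[_ _ /eqP].
- by move=> _ /and3P[_ _ /eqP <-] /and3P[_ _ /eqP].
move=> ha /and3P[/andP[hbl hn] /eqP hf /eqP hb] /and3P[/andP[hbl' hn'] /eqP hf' /eqP hb'].
rewrite /= in hf hf'.
have e1 : bl = bl'.
  apply: (@prefix_uniq bl (flatten ss) bl' (flatten tt)).
  - by rewrite hf.
  - by rewrite hf hf'.
  - by move: hb'; rewrite -hb => -[].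
subst bl'; congr (_ :: _).
have ef : flatten ss = flatten tt.
  by move/eqP: (etrans hf (esym hf')); rewrite eqseq_cat // => /andP[_ /eqP].
apply: (IH (flatten ss) (map sumn ss)).
- by move: ha; rewrite -hf is_comp_cat => /andP[].
- by apply/and3P; split.
- apply/and3P; split => //; first by rewrite ef.
  by move: hb'; rewrite -hb => -[->].
Qed.

Lemma Pp_le a b ss : is_comp a -> Pp a b ss -> comp_le b a.
Proof.
move=> ha hP; have hb := Pp_comp ha hP; move: hP => /and3P[hn /eqP hf /eqP hb'].
rewrite /comp_le hb ha -hb' -sumn_flatten hf eqxx /=.
rewrite (Iset_map_sumn hf) all_map; apply/allP => v hv /=.
have := Iset_range (comp_sizes hn) hv; rewrite -size_flatten hf => /andP[h1 h2].
rewrite mem_Iset; apply/hasP; exists v => //; rewrite mem_iota; lia.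
Qed.

Lemma le_Pp a b : is_comp a -> comp_le b a -> Pp a b (blocks a (Iset b)).
Proof.
move=> ha /and4P[hb _ /eqP hs /allP hsub].
rewrite /Pp blocks_nonempty blocks_flatten eqxx /=; apply/eqP.
have hP : Pp a (map sumn (blocks a (Iset b))) (blocks a (Iset b)).
  by rewrite /Pp blocks_nonempty blocks_flatten !eqxx.
apply: Iset_inj => //; first exact: Pp_comp hP.
  by rewrite -sumn_flatten blocks_flatten hs.
move=> v; rewrite (Iset_map_sumn (blocks_flatten a _)).
apply/mapP/idP => [[j]|hv].
  by rewrite blocks_pos => /and3P[_ _ h] ->.
have := hsub v hv; rewrite mem_Iset => /hasP[j]; rewrite mem_iota => hj /eqP ev.
exists j => //; rewrite blocks_pos -ev hv andbT; lia.
Qed.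

Lemma Pp_blocks a b ss : is_comp a -> Pp a b ss -> blocks a (Iset b) = ss.
Proof. by move=> ha hP; apply: (Pp_uniq ha _ hP); apply: le_Pp => //; apply: Pp_le hP. Qed.

Lemma mem_OtE a i : (i \in OtE a) =
  [&& (0 < i)%N, (i < size a)%N, odd (nth 0%N a i.-1) & ~~ odd (nth 0%N a i)].
Proof.
rewrite /OtE mem_filter mem_iota.
case: (posnP i) => [->|hi] /=; first by rewrite andbF.
have -> : (i < 1 + (size a).-1)%N = (i < size a)%N by apply/idP/idP; lia.
by rewrite andbC.
Qed.

Lemma OtE_cut (ss : seq (seq nat)) : all (fun bl => bl != [::]) ss ->
  all (fun i => i \in Iset (map size ss)) (OtE (flatten ss)) =
  all (fun bl => OtE bl == [::]) ss.
Proof.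
elim: ss => [|bl ss IH] //= /andP[hbl hn].
rewrite -IH //; apply/allP/andP => [H|[/eqP H0 /allP H]].
  split.
    apply/eqP; case E: (OtE bl) => [|i l] //.
    have hi : i \in OtE bl by rewrite E mem_head.
    move: (hi); rewrite mem_OtE => /and4P[h1 h2 h3 h4].
    have hi' : i \in OtE (bl ++ flatten ss).
      rewrite mem_OtE size_cat !nth_cat h2 h4.
      have -> : (i.-1 < size bl)%N = true by lia.
      rewrite h3 /= andbT; apply/andP; split; lia.
    have := Iset_ge (H i hi'); lia.
  apply/allP => i hi; move: (hi); rewrite mem_OtE => /and4P[h1 h2 h3 h4].
  have hi' : (size bl + i)%N \in OtE (bl ++ flatten ss).
    rewrite mem_OtE size_cat !nth_cat.
    have -> : ((size bl + i).-1 < size bl)%N = false by apply/negbTE; lia.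
    have -> : ((size bl + i) < size bl)%N = false by apply/negbTE; lia.
    have -> : ((size bl + i).-1 - size bl = i.-1)%N by lia.
    rewrite addKn h3 h4 /= andbT; apply/andP; split; lia.
  have := H _ hi'; case: ss hn IH h2 {H hi' hi h3 h4} => [|bl2 ss] // hn IH h2.
  rewrite Iset_cons /= in_cons mem_map_addn addKn leq_addr /=.
  by have -> : (size bl + i == size bl)%N = false by apply/negbTE/eqP; lia.
move=> i; rewrite mem_OtE size_cat !nth_cat => /and4P[h1 h2 h3 h4].
case: (ltngtP i (size bl)) => hl.
- have hi : i \in OtE bl.
    rewrite mem_OtE hl h1 /=.
    have e : (i.-1 < size bl)%N = true by lia.
    by rewrite e in h3; rewrite h3; rewrite hl in h4.
  by rewrite H0 in hi.
- have hi : (i - size bl)%N \in OtE (flatten ss).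
    have e : (i.-1 < size bl)%N = false by apply/negbTE; lia.
    rewrite e in h3; rewrite ltnNge (ltnW hl) /= in h4.
    rewrite mem_OtE h4 andbT.
    have -> : ((i - size bl).-1 = i.-1 - size bl)%N by lia.
    rewrite h3 andbT; apply/andP; split; lia.
  have := H _ hi; case: ss hn IH h2 {H hi h3 h4} => [|bl2 ss] hn IH h2; first by rewrite /= in h2; lia.
  move=> hm; rewrite Iset_cons /= in_cons mem_map_addn hm; apply/orP; right; apply/andP; split; lia.
- subst i; case: ss hn IH h2 {H h3 h4} => [|bl2 ss] hn IH h2; first by rewrite /= in h2; lia.
  by rewrite Iset_cons /= in_cons eqxx.
Qed.

Lemma le_mo a b ss : is_comp a -> Pp a b ss ->
  comp_le (m_o a) b = all (fun bl => OtE bl == [::]) ss.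
Proof.
move=> ha hP; have hb := Pp_comp ha hP.
move: (hP) => /and3P[hn /eqP hf /eqP hb'].
set tt := blocks a [seq sumn (take i a) | i <- OtE a].
have hPt : Pp a (m_o a) tt by rewrite /Pp blocks_nonempty blocks_flatten !eqxx.
rewrite /comp_le (Pp_comp ha hPt) hb.
have -> : sumn (m_o a) = sumn b.
  by rewrite -hb' -!sumn_flatten hf blocks_flatten.
rewrite eqxx /= -hb' (Iset_map_sumn hf) (Iset_map_sumn (blocks_flatten a _)) all_map.
rewrite -(OtE_cut hn) hf.
have heq : Iset (map size tt) =i OtE a.
  move=> j; rewrite blocks_pos mem_OtE.
  apply/and3P/and4P => [[h1 h2 /mapP[k hk ek]]|[h1 h2 h3 h4]].
    move: (hk); rewrite mem_OtE => /and4P[k1 k2 k3 k4].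
    have ejk : j = k by apply: (psum_inj ha) => //; lia.
    by subst k; split.
  split => //; apply/mapP; exists j => //; by rewrite mem_OtE h1 h2 h3 h4.
rewrite (eq_all_r heq); apply: eq_in_all => j hj /=.
apply/mapP/idP => [[k hk ek]|hj']; last by exists j.
have := Iset_range (comp_sizes hn) hk; rewrite -size_flatten hf => /andP[_ hk2].
move: hj; rewrite mem_OtE => /and4P[_ hj2 _ _].
have ejk : j = k by apply: (psum_inj ha) => //; lia.
by subst.
Qed.

Definition wt (bl : seq nat) : rat :=
  (((count odd bl)`! * (count (fun x => ~~ odd x) bl)`!)%:R)^-1.

Lemma S_Pp a b ss : is_comp a -> Pp a b ss ->
  S_fun a b = if all (fun bl => OtE bl == [::]) ss then (\prod_(bl <- ss) wt bl)%R else 0%R.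
Proof.
move=> ha hP; rewrite /S_fun (le_mo ha hP) (Pp_le ha hP) andbT.
by rewrite /c_coef (Pp_blocks ha hP).
Qed.

Lemma S_case a b : is_comp a -> S_fun a b = 0%R \/ exists ss, Pp a b ss.
Proof.
move=> ha; case hl: (comp_le b a); last by left; rewrite /S_fun hl andbF.
by right; exists (blocks a (Iset b)); apply: le_Pp.
Qed.

Lemma Pp_cat a1 a2 d e ss1 ss2 : Pp a1 d ss1 -> Pp a2 e ss2 ->
  Pp (a1 ++ a2) (d ++ e) (ss1 ++ ss2).
Proof.
move=> /and3P[h1 /eqP f1 /eqP m1] /and3P[h2 /eqP f2 /eqP m2].
by rewrite /Pp all_cat h1 h2 flatten_cat f1 f2 map_cat m1 m2 !eqxx.
Qed.

Lemma Pp_split a d e ss : Pp a (d ++ e) ss ->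
  Pp (take (size (flatten (take (size d) ss))) a) d (take (size d) ss) /\
  Pp (drop (size (flatten (take (size d) ss))) a) e (drop (size d) ss).
Proof.
move=> /and3P[hn /eqP hf /eqP hm].
have ha : a = flatten (take (size d) ss) ++ flatten (drop (size d) ss).
  by rewrite -flatten_cat cat_take_drop.
have hn' := hn; rewrite -(cat_take_drop (size d) ss) all_cat in hn'.
case/andP: hn' => hn1 hn2.
rewrite ha take_size_cat // drop_size_cat //; split; apply/and3P; split => //.
- by rewrite map_take hm take_size_cat.
- by rewrite map_drop hm drop_size_cat.
Qed.

Lemma is_comp_take k a : is_comp a -> is_comp (take k a).
Proof. by move=> ha; move: ha; rewrite -{1}(cat_take_drop k a) is_comp_cat => /andP[]. Qed.
Lemma is_comp_drop k a : is_comp a -> is_comp (drop k a).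
Proof. by move=> ha; move: ha; rewrite -{1}(cat_take_drop k a) is_comp_cat => /andP[]. Qed.

Import GRing.Theory.
Local Open Scope ring_scope.

Theorem mainTheorem3 (alpha : seq nat) (Halpha : is_comp alpha) (d e : seq nat) :
  Delta (S_fun alpha) d e =
  \sum_(k < (size alpha).+1)
     tensor (S_fun (take k alpha)) (S_fun (drop k alpha)) d e.
Proof.
rewrite /Delta /tensor.
have key : forall k, (k <= size alpha)%N -> S_fun (take k alpha) d * S_fun (drop k alpha) e != 0 ->
    exists t1 t2, [/\ Pp alpha (d ++ e) (t1 ++ t2), Pp (take k alpha) d t1 & Pp (drop k alpha) e t2].
  move=> k hk hne.
  case: (S_case d (is_comp_take k Halpha)) => [h|[t1 ht1]]; first by rewrite h mul0r eqxx in hne.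
  case: (S_case e (is_comp_drop k Halpha)) => [h|[t2 ht2]]; first by rewrite h mulr0 eqxx in hne.
  exists t1, t2; split => //; have := Pp_cat ht1 ht2; by rewrite cat_take_drop.
case E: (Pp alpha (d ++ e) (blocks alpha (Iset (d ++ e)))).
  set ss := blocks alpha (Iset (d ++ e)) in E.
  have [h1 h2] := Pp_split E.
  set k0 := size (flatten (take (size d) ss)) in h1 h2.
  have hk0 : (k0 < (size alpha).+1)%N.
    move: E => /and3P[_ /eqP hf _].
    rewrite ltnS /k0 -hf -{2}(cat_take_drop (size d) ss) flatten_cat size_cat; exact: leq_addr.
  rewrite (bigD1 (Ordinal hk0)) //= big1 ?addr0.
    rewrite (S_Pp Halpha E) (S_Pp (is_comp_take _ Halpha) h1) (S_Pp (is_comp_drop _ Halpha) h2).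
    rewrite -{1 2}(cat_take_drop (size d) ss) all_cat big_cat /=.
    by case: (all _ (take _ _)); case: (all _ (drop _ _)); rewrite ?mul0r ?mulr0.
  move=> [k hk] /= hne; have hk' : (k <= size alpha)%N by rewrite -ltnS.
  case: (eqVneq (S_fun (take k alpha) d * S_fun (drop k alpha) e) 0) => // /(key k hk').
  move=> [t1 [t2 [hP ht1 ht2]]].
  have es := Pp_uniq Halpha E hP.
  have hs : size t1 = size d by move: ht1 => /and3P[_ _ /eqP <-]; rewrite size_map.
  have et : take (size d) ss = t1 by rewrite es -hs take_size_cat.
  have ek : k0 = k.
    rewrite /k0 et; move: ht1 => /and3P[_ /eqP -> _]; rewrite size_take.
    by case: ltnP => // h; apply/eqP; rewrite eqn_leq h hk'.
  by case/eqP: hne; apply: val_inj; rewrite /= ek.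
have -> : S_fun alpha (d ++ e) = 0.
  case: (S_case (d ++ e) Halpha) => [//|[ss hP]].
  by rewrite (Pp_blocks Halpha hP) hP in E.
apply/esym; apply: big1 => -[k hk] _ /=; have hk' : (k <= size alpha)%N by rewrite -ltnS.
case: (eqVneq (S_fun (take k alpha) d * S_fun (drop k alpha) e) 0) => // /(key k hk').
move=> [t1 [t2 [hP _ _]]].
by rewrite (Pp_blocks Halpha hP) hP in E.
Qed.
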